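(* Let $P=MN_P$ be a standard parabolic subgroup of $G$, $\pi\in\Pi_{\mathrm{disc}}(M)$, $Q\subset R$ standard parabolic subgroups and $w,w'\in{}_QW_P$ with $P_\pi\subset P_w\cap P_{w'}$. Then the map $$(\lambda,\lambda')\mapsto(\hat\theta_Q^R\theta_R)(w\lambda+w'\lambda'+w\nu^P_{P_w}+w'\nu^P_{P_{w'}})$$ does not vanish identically on $i\mathfrak a_P^{G,*}\times i\mathfrak a_P^{G,*}$.
   Context: $F$ is a number field, $G=\mathrm{GL}_n$ over $F$, $P_0$ the upper triangular Borel, $W\cong\mathfrak S_n$, $\mathfrak a_0=\mathbb R^n$ (identified with its dual via the standard inner product). For standard $Q\subset R$: $\Delta_Q^R$ the simple roots of $A_Q$ in $M_R\cap N_Q$, $\Delta_R^\vee$ the simple coroots of $R$, $\hat\Delta_Q^{R,\vee}\subset\mathfrak a_Q^R$ the basis dual to $\Delta_Q^R$ (simple coweights); $\theta_R(\mu)=\mathrm{vol}(\mathfrak a_R^G/\mathbb Z(\Delta_R^\vee))^{-1}\prod_{\alpha\in\Delta_R}\langle\mu,\alpha^\vee\rangle$ and $\hat\theta_Q^R(\mu)=\mathrm{vol}(\mathfrak a_Q^R/\mathbb Z(\hat\Delta_Q^{R,\vee}))^{-1}\prod_{\varpi^\vee\in\hat\Delta_Q^{R,\vee}}\langle\mu,\varpi^\vee\rangle$. ${}_QW_P$ is the set of $w\in W$ with $M_P\cap w^{-1}P_0w=M_P\cap P_0$ and $M_Q\cap wP_0w^{-1}=M_Q\cap P_0$; $P_w=(M_P\cap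 w^{-1}Qw)N_P$. $\Pi_{\mathrm{disc}}(M)$: discrete automorphic representations of $M(\mathbb A)$ with central character trivial on $A_M^\infty$. Write $M=\prod G_{n_i}$, $\pi=\boxtimes\pi_i$; by Moeglin–Waldspurger $n_i=r_id_i$ with $\pi_i$ the residual representation attached to $\sigma_i^{\otimes d_i}$, $\sigma_i$ cuspidal on $\mathrm{GL}_{r_i}$; $P_\pi\subset P$ is the standard parabolic with $P_\pi\cap M=\prod P_{\pi_i}$, $P_{\pi_i}$ standard in $\mathrm{GL}_{n_i}$ with Levi $\mathrm{GL}_{r_i}^{d_i}$. For $P_\pi\subset S\subset P$, $S\cap M=\prod S_i$, $\nu_S^P=(-\rho_{S_i}^{\mathrm{GL}_{n_i}}/r_i)_i\in\mathfrak a_S^{P,*}$. *)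

(* Defs.v *)
From HB Require Import structures.
From mathcomp Require Import all_boot all_order all_algebra all_fingroup.
From mathcomp Require Import reals complex.
Set Implicit Arguments. Unset Strict Implicit. Unset Printing Implicit Defensive.
Import Order.TTheory GRing.Theory Num.Theory.
Local Open Scope ring_scope.

(* Conventions.  G = GL_n, coordinates 'I_n (0-based).  The simple root     *)
(* alpha_k (k : 'I_n.-1) is e_k - e_{k+1}.  A standard parabolic subgroup   *)
(* is encoded by the set D : {set 'I_n.-1} of simple roots of its Levi      *)
(* (Delta_0^P); P_0 corresponds to set0, G to setT.  Q \subset R as groups   *)
(* iff DQ \subset DR.                                                        *)

(* i and j lie in the same diagonal block of the standard Levi given by D *)
Definition sameblk (n : nat) (D : {set 'I_n.-1}) (i j : nat) : bool :=
  [forall k : 'I_n.-1, ((minn i j <= k)%N && (k < maxn i j)%N) ==> (k \in D)].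

Definition blocksize (n : nat) (D : {set 'I_n.-1}) (a : nat) : nat :=
  #|[set b : 'I_n | sameblk D a b]|.

Definition blockstart (n : nat) (D : {set 'I_n.-1}) (a : nat) : nat :=
  #|[set b : 'I_n | (b < a)%N && ~~ sameblk D a b]|.

Definition inPar (n : nat) (D : {set 'I_n.-1}) (g : 'M[rat]_n) : bool :=
  (g \in unitmx) &&
  [forall i : 'I_n, forall j : 'I_n, ((j < i)%N && ~~ sameblk D i j) ==> (g i j == 0)].
Definition inLevi (n : nat) (D : {set 'I_n.-1}) (g : 'M[rat]_n) : bool :=
  (g \in unitmx) &&
  [forall i : 'I_n, forall j : 'I_n, ~~ sameblk D i j ==> (g i j == 0)].
Definition inUnip (n : nat) (D : {set 'I_n.-1}) (g : 'M[rat]_n) : bool :=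
  [forall i : 'I_n, forall j : 'I_n,
    if sameblk D i j then g i j == (i == j)%:R else ((j < i)%N ==> (g i j == 0))].
Definition inB (n : nat) (g : 'M[rat]_n) : bool := inPar (set0 : {set 'I_n.-1}) g.

(* permutation matrix representing w : w e_j = e_{w j} *)
Definition wmat (n : nat) (w : 'S_n) : 'M[rat]_n := \matrix_(i, j) (i == w j)%:R.
Definition wconj (n : nat) (w : 'S_n) (g : 'M[rat]_n) : 'M[rat]_n :=
  wmat w *m g *m invmx (wmat w).

(* w \in _Q W_P :  M_P \cap w^{-1} P_0 w = M_P \cap P_0  and
                   M_Q \cap w P_0 w^{-1} = M_Q \cap P_0 *)
Definition in_QWP (n : nat) (DQ DP : {set 'I_n.-1}) (w : 'S_n) : Prop :=
  (forall g : 'M[rat]_n, (inLevi DP g && inB (wconj w g)) = (inLevi DP g && inB g)) /\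
  (forall g : 'M[rat]_n, (inLevi DQ g && inB (wconj w^-1 g)) = (inLevi DQ g && inB g)).

Definition inPw (n : nat) (DQ DP : {set 'I_n.-1}) (w : 'S_n) (g : 'M[rat]_n) : Prop :=
  exists m u : 'M[rat]_n,
    [/\ inLevi DP m, inPar DQ (wconj w m), inUnip DP u & g = m *m u].

(* P_pi for the data r: within each block of P (size n_i = r_i d_i) the Levi
   of P_pi is GL_{r_i}^{d_i}.  r a = r_i for a coordinate a in block i. *)
Definition Dpi (n : nat) (DP : {set 'I_n.-1}) (r : nat -> nat) : {set 'I_n.-1} :=
  [set k : 'I_n.-1 | (k \in DP) && ~~ (r k %| (k.+1 - blockstart DP k))%N].

(* ---------------- a_0 = R^n, identified with its dual ------------------- *)
Section Real.
Variable R : realType.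
Local Open Scope complex_scope.

Definition dotv (n : nat) (v u : 'I_n -> R) : R := \sum_i v i * u i.

Definition in_a (n : nat) (D : {set 'I_n.-1}) (v : 'I_n -> R) : Prop :=
  forall i j : 'I_n, sameblk D i j -> v i = v j.
Definition in_aG (n : nat) (D : {set 'I_n.-1}) (v : 'I_n -> R) : Prop :=
  in_a D v /\ \sum_i v i = 0.
(* v \in a_0^D  (span of the coroots of M_D) *)
Definition in_a0 (n : nat) (D : {set 'I_n.-1}) (v : 'I_n -> R) : Prop :=
  forall i : 'I_n, \sum_(j : 'I_n | sameblk D i j) v j = 0.

(* alpha_k = alpha_k^vee = e_k - e_{k+1} *)
Definition ealpha (n : nat) (k : 'I_n.-1) : 'I_n -> R :=
  fun i => (i == k :> nat)%:R - (i == k.+1 :> nat)%:R.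

Definition projA (n : nat) (D : {set 'I_n.-1}) (v : 'I_n -> R) : 'I_n -> R :=
  fun i => (\sum_(j : 'I_n | sameblk D i j) v j) / (blocksize D i)%:R.

(* simple coroot of R attached to k \notin DR: projection of alpha_k^vee to a_R *)
Definition coroot (n : nat) (DR : {set 'I_n.-1}) (k : 'I_n.-1) : 'I_n -> R :=
  projA DR (ealpha k).

Definition gram (n : nat) (A : {set 'I_n.-1}) (f : 'I_n.-1 -> 'I_n -> R) : 'M[R]_#|A| :=
  \matrix_(i, j) dotv (f (enum_val i)) (f (enum_val j)).

(* vol(span / Z(f k, k in A)) = sqrt det Gram *)
Definition covol (n : nat) (A : {set 'I_n.-1}) (f : 'I_n.-1 -> 'I_n -> R) : R :=
  Num.sqrt (\det (gram A f)).

Definition pairC (n : nat) (mu : 'I_n -> R[i]) (v : 'I_n -> R) : R[i] :=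
  \sum_i mu i * (v i)%:C.

Definition thetaR (n : nat) (DR : {set 'I_n.-1}) (mu : 'I_n -> R[i]) : R[i] :=
  ((covol (~: DR) (coroot DR))^-1)%:C * \prod_(k in ~: DR) pairC mu (coroot DR k).

Definition is_coweight_basis (n : nat) (DQ DR : {set 'I_n.-1})
    (varpi : 'I_n.-1 -> 'I_n -> R) : Prop :=
  (forall k, k \in DR :\: DQ -> in_a DQ (varpi k) /\ in_a0 DR (varpi k)) /\
  (forall k j, k \in DR :\: DQ -> j \in DR :\: DQ ->
     dotv (varpi k) (ealpha j) = (k == j)%:R).

Definition thetahat (n : nat) (DQ DR : {set 'I_n.-1})
    (varpi : 'I_n.-1 -> 'I_n -> R) (mu : 'I_n -> R[i]) : R[i] :=
  ((covol (DR :\: DQ) varpi)^-1)%:C * \prod_(k in DR :\: DQ) pairC mu (varpi k).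

(* rho_S^P: half the sum of the roots e_a - e_b (a<b) of T in N_S \cap M_P *)
Definition rhoSP (n : nat) (DS DP : {set 'I_n.-1}) (a : 'I_n) : R :=
  (\sum_(b : 'I_n | sameblk DP a b && ~~ sameblk DS a b)
      (if (a < b)%N then 1 else -1)) / 2.

Definition nuSP (n : nat) (DS DP : {set 'I_n.-1}) (r : nat -> nat) (a : 'I_n) : R :=
  - rhoSP DS DP a / (r a)%:R.

End Real.

Definition wact (T : Type) (n : nat) (w : 'S_n) (v : 'I_n -> T) : 'I_n -> T :=
  fun i => v (w^-1 i)%g.

(* Main.v *)
Require Import Defs.
From HB Require Import structures.
From mathcomp Require Import all_boot all_order all_algebra all_fingroup.
From mathcomp Require Import reals complex.
From mathcomp Require Import zify ring lra.
Import Order.TTheory GRing.Theory Num.Theory.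
Local Open Scope ring_scope.
From mathcomp Require Import polyrcf.
From Stdlib Require Classical_Prop.

Set Implicit Arguments. Unset Strict Implicit. Unset Printing Implicit Defensive.

Section Blk.
Variable n : nat.
Implicit Types D : {set 'I_n.-1}.

Lemma sameblkP D (i j : nat) :
  reflect (forall k : 'I_n.-1, (minn i j <= k)%N -> (k < maxn i j)%N -> k \in D)
          (sameblk D i j).
Proof.
apply: (iffP forallP) => H k.
  by move=> h1 h2; have := H k; rewrite h1 h2.
by apply/implyP => /andP[h1 h2]; exact: H.
Qed.

Lemma sameblk_refl D i : sameblk D i i.
Proof. by apply/sameblkP => k; rewrite minnn maxnn => h1 h2; lia. Qed.

Lemma sameblk_sym D i j : sameblk D i j = sameblk D j i.
Proof. by rewrite /sameblk minnC maxnC. Qed.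

Lemma sameblk_trans D i j l : sameblk D i j -> sameblk D j l -> sameblk D i l.
Proof.
move=> /sameblkP H1 /sameblkP H2; apply/sameblkP => k h1 h2.
have [hk|hk] := boolP ((minn i j <= k) && (k < maxn i j))%N.
  by case/andP: hk => a b; exact: H1.
apply: H2; move: hk h1 h2; rewrite negb_and -!ltnNge; lia.
Qed.

Lemma sameblk_cut D (k : 'I_n.-1) (i j : nat) :
  k \notin D -> (i <= k)%N -> (k < j)%N -> ~~ sameblk D i j.
Proof.
move=> kD h1 h2; apply/negP => /sameblkP H; move: kD; rewrite H //; lia.
Qed.

Lemma sameblk_succ D (k : 'I_n.-1) : sameblk D k k.+1 = (k \in D).
Proof.
apply/sameblkP/idP => [H|kD l h1 h2]; first by apply: H; lia.
have -> : l = k by apply: val_inj => /=; lia.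
exact: kD.
Qed.

Lemma sameblk_mid D (i j l : nat) : sameblk D i j -> (i <= l <= j)%N -> sameblk D i l.
Proof.
move=> /sameblkP H hl; apply/sameblkP => k h1 h2; apply: H; lia.
Qed.

Lemma sameblk_sub D D' i j : D \subset D' -> sameblk D i j -> sameblk D' i j.
Proof.
move=> /subsetP sD /sameblkP H; apply/sameblkP => k h1 h2; apply: sD; exact: H.
Qed.

End Blk.

Section Mat.
Variable n : nat.

Lemma wmat_mulV (w : 'S_n) : wmat w *m wmat w^-1 = 1%:M.
Proof.
apply/matrixP => i j; rewrite !mxE.
rewrite (bigD1 (w^-1 j)%g) //= big1 ?addr0.
  by rewrite !mxE permKV eqxx mulr1.
by move=> l hl; rewrite !mxE (negbTE hl) mulr0.
Qed.

Lemma invmx_wmat (w : 'S_n) : invmx (wmat w) = wmat w^-1.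
Proof.
have [hu _] := mulmx1_unit (wmat_mulV w).
by rewrite -[invmx _]mulmx1 -(wmat_mulV w) mulmxA mulVmx // mul1mx.
Qed.

Lemma wconjE (w : 'S_n) (g : 'M[rat]_n) i j : wconj w g i j = g (w^-1 i)%g (w^-1 j)%g.
Proof.
rewrite /wconj invmx_wmat !mxE (bigD1 (w^-1 j)%g) //= big1 ?addr0.
  rewrite !mxE eqxx mulr1 (bigD1 (w^-1 i)%g) //= big1 ?addr0.
    by rewrite !mxE permKV eqxx mul1r.
  move=> l hl; rewrite !mxE; case: eqP => [E|]; last by rewrite mul0r.
  by rewrite E permK eqxx in hl.
by move=> l hl; rewrite !mxE (negbTE hl) mulr0.
Qed.

Definition elem (a b : 'I_n) : 'M[rat]_n := 1%:M + delta_mx a b.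

Lemma elemE a b i j : elem a b i j = (i == j)%:R + ((i == a) && (j == b))%:R.
Proof. by rewrite !mxE. Qed.

Lemma elem_unit a b : a != b -> elem a b \in unitmx.
Proof.
move=> ab; have h : elem a b *m (1%:M - delta_mx a b) = 1%:M.
  rewrite /elem mulmxDl mulmxBr mulmxBr !mul1mx !mulmx1 mul_delta_mx_0 1?eq_sym //.
  by rewrite subr0 subrK.
by case: (mulmx1_unit h).
Qed.

Lemma sameblk0 (i j : 'I_n) : sameblk (set0 : {set 'I_n.-1}) i j -> i = j.
Proof.
move=> H; apply: val_inj => /=; apply/eqP; apply: contraTT H => hij.
have hm : (minn i j < n.-1)%N.
  by move: hij (ltn_ord i) (ltn_ord j); lia.
apply/negP => /sameblkP /(_ (Ordinal hm)); rewrite inE /= leqnn => H.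
by move: (H isT); move: hij; lia.
Qed.

Lemma w_mono (DQ DP : {set 'I_n.-1}) (w : 'S_n) : in_QWP DQ DP w ->
  forall j1 j2 : 'I_n, sameblk DP j1 j2 -> (j1 < j2)%N -> (w j1 < w j2)%N.
Proof.
move=> [H _] j1 j2 hb hlt; rewrite ltnNge leq_eqVlt negb_or; apply/andP; split.
  by apply/eqP => /val_inj /perm_inj E; move: hlt; rewrite E ltnn.
apply/negP => hgt.
have j12 : j1 != j2 by apply/eqP => E; move: hlt; rewrite E ltnn.
have := H (elem j1 j2).
have hL : inLevi DP (elem j1 j2).
  rewrite /inLevi elem_unit //=; apply/forallP => i; apply/forallP => j; apply/implyP => hij.
  rewrite elemE; case: (eqVneq i j) => [E|ne]; first by move: hij; rewrite E sameblk_refl.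
  case: (eqVneq i j1) => [Ei|] /=; last by rewrite addr0.
  case: (eqVneq j j2) => [Ej|] /=; last by rewrite addr0.
  by move: hij; rewrite Ei Ej hb.
have hB : inB (elem j1 j2).
  rewrite /inB /inPar elem_unit //=; apply/forallP => i; apply/forallP => j; apply/implyP.
  case/andP => hji _; rewrite elemE; case: (eqVneq i j) => [E|ne]; first by move: hji; rewrite E ltnn.
  case: (eqVneq i j1) => [Ei|] /=; last by rewrite addr0.
  case: (eqVneq j j2) => [Ej|] /=; last by rewrite addr0.
  by move: hji; rewrite Ei Ej; lia.
rewrite hL hB /= => /andP[_ /forallP /(_ (w j1)) /forallP /(_ (w j2)) /implyP H1].
have hs : ~~ sameblk (set0 : {set 'I_n.-1}) (w j1) (w j2).
  by apply/negP => /sameblk0 /perm_inj E; rewrite E eqxx in j12.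
have := H1; rewrite hgt hs wconjE !permK elemE !eqxx (negbTE j12) /= add0r oner_eq0.
by move/(_ isT).
Qed.

Lemma S_sep (DQ DP DS : {set 'I_n.-1}) (w : 'S_n)
  (HS : forall g : 'M[rat]_n, inPar DS g <-> inPw DQ DP w g) (j j' : 'I_n) :
  sameblk DP j j' -> (w j < w j')%N -> ~~ sameblk DQ (w j) (w j') -> ~~ sameblk DS j j'.
Proof.
move=> hP hlt hQ; apply/negP => hS.
have jj : j' != j by apply/eqP => E; move: hlt; rewrite E ltnn.
have hg : inPar DS (elem j' j).
  rewrite /inPar elem_unit //=; apply/forallP => i; apply/forallP => l; apply/implyP.
  case/andP => hli hn; rewrite elemE; case: (eqVneq i l) => [E|ne]; first by move: hli; rewrite E ltnn.
  case: (eqVneq i j') => [Ei|] /=; last by rewrite addr0.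
  case: (eqVneq l j) => [Ej|] /=; last by rewrite addr0.
  by move: hn; rewrite Ei Ej sameblk_sym hS.
have [m [u [hm hmQ hu E]]] := (HS _).1 hg.
have e0 : (m *m u) j' j = 1 by rewrite -E elemE !eqxx (negbTE jj) /= add0r.
have e1 : m j' j = 1.
  rewrite -e0 !mxE (bigD1 j) //= big1 ?addr0.
    move/forallP: (hu) => /(_ j) /forallP /(_ j).
    by rewrite sameblk_refl /= eqxx => /eqP ->; rewrite mulr1.
  move=> l hl; case/andP: hm => _ /forallP /(_ j') /forallP /(_ l) /implyP hm.
  have [bl|bl] := boolP (sameblk DP j' l); last by rewrite (eqP (hm bl)) mul0r.
  have bl' : sameblk DP l j by rewrite sameblk_sym; exact: (sameblk_trans hP bl).
  move/forallP: hu => /(_ l) /forallP /(_ j); rewrite bl' /= (negbTE hl) => /eqP ->.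
  by rewrite mulr0.
case/andP: hmQ => _ /forallP /(_ (w j')) /forallP /(_ (w j)) /implyP.
rewrite hlt sameblk_sym hQ wconjE !permK e1 oner_eq0.
by move/(_ isT).
Qed.

End Mat.

Section Avg.
Variable R : realType.
Variable n : nat.
Implicit Types D : {set 'I_n.-1}.

Lemma blocksize_eq D (i j : 'I_n) : sameblk D i j -> blocksize D i = blocksize D j.
Proof.
move=> h; rewrite /blocksize; apply: eq_card => b; rewrite !inE; apply/idP/idP => hb.
  by apply: sameblk_trans hb; rewrite sameblk_sym.
exact: sameblk_trans h hb.
Qed.

Lemma blocksize_gt0 D (i : 'I_n) : (0 < blocksize D i)%N.
Proof. by apply/card_gt0P; exists i; rewrite inE sameblk_refl. Qed.

Lemma sum_cond_const (P : pred 'I_n) (c : R) :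
  \sum_i (if P i then c else 0) = c * #|[set i | P i]|%:R.
Proof.
rewrite -big_mkcond /= -sum1_card natr_sum mulr_sumr mulr1.
by apply: eq_bigl => i; rewrite inE.
Qed.

Lemma avg_sum D (F : 'I_n -> R) :
  \sum_(i : 'I_n) F i = \sum_(i : 'I_n) (\sum_(j : 'I_n | sameblk D i j) F j) / (blocksize D i)%:R.
Proof.
rewrite [RHS](eq_bigr (fun i : 'I_n => \sum_(j : 'I_n) (if sameblk D i j then F j / (blocksize D i)%:R else 0))); last first.
  move=> i _; rewrite big_mkcond mulr_suml; apply: eq_bigr => j _.
  by case: ifP; rewrite ?mul0r.
rewrite exchange_big; apply: eq_bigr => j _.
rewrite (eq_bigr (fun i : 'I_n => if sameblk D j i then F j / (blocksize D j)%:R else 0)); last first.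
  move=> i _; rewrite sameblk_sym; case: ifP => // h.
  by rewrite (blocksize_eq h).
rewrite sum_cond_const -/(blocksize D j) mulfVK //.
by rewrite pnatr_eq0 -lt0n blocksize_gt0.
Qed.

Lemma dot_projA D (v h : 'I_n -> R) : in_a D h -> dotv (projA D v) h = dotv v h.
Proof.
move=> Hh; rewrite /dotv [RHS](avg_sum D); apply: eq_bigr => i _.
rewrite /projA mulrAC; congr (_ / _); rewrite mulr_suml; apply: eq_bigr => j hj.
by rewrite (Hh i j hj).
Qed.

Lemma sum_in_a0 D (v : 'I_n -> R) : in_a0 D v -> \sum_i v i = 0.
Proof.
move=> Hv; rewrite (avg_sum D); apply: big1 => i _; by rewrite Hv mul0r.
Qed.

End Avg.

Section Rho.
Variable R : realType.
Variable n : nat.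
Implicit Types D : {set 'I_n.-1}.

Definition Fr (DS DP : {set 'I_n.-1}) (a b : 'I_n) : R :=
  if sameblk DP a b && ~~ sameblk DS a b then (if (a < b)%N then 1 else -1) else 0.

Lemma rhoE DS DP a : rhoSP R DS DP a = (\sum_b Fr DS DP a b) / 2.
Proof. by rewrite /rhoSP big_mkcond. Qed.

Lemma Fr_le DS DP (j k b : 'I_n) : sameblk DP j k -> (j < k)%N -> ~~ sameblk DS j k ->
  Fr DS DP k b <= Fr DS DP j b.
Proof.
move=> hP hjk hS; rewrite /Fr.
have -> : sameblk DP k b = sameblk DP j b.
  apply/idP/idP => h; first exact: sameblk_trans hP h.
  by apply: sameblk_trans h; rewrite sameblk_sym.
case: (sameblk DP j b) => //=.
case: (ltngtP b j) => [hbj|hjb|ebj].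
- have -> : (k < b)%N = false by apply/negbTE; rewrite -leqNgt; lia.
  case hk: (sameblk DS k b); case hj: (sameblk DS j b) => /=; try lra.
  have : sameblk DS b j.
    by apply: (@sameblk_mid _ _ b k); [rewrite sameblk_sym hk | lia].
  by rewrite sameblk_sym hj.
- case: (ltngtP b k) => [hbk|hkb|ebk].
  + 
    by case: (sameblk DS k b); case: (sameblk DS j b) => /=; lra.
  + have -> : sameblk DS j b = false.
      apply/negbTE; apply: contra hS => h; apply: (@sameblk_mid _ _ j b) => //; lia.
    by case: (sameblk DS k b) => /=; lra.
  + have -> : b = k by apply: val_inj.
    rewrite sameblk_refl hS /=; lra.
- have -> : b = j by apply: val_inj.
  have -> : (k < j)%N = false by apply/negbTE; rewrite -leqNgt; lia.
  have -> : sameblk DS k j = false by rewrite sameblk_sym (negbTE hS).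
  rewrite sameblk_refl /=; lra.
Qed.

Lemma Fr_kk DS DP (k : 'I_n) : Fr DS DP k k = 0.
Proof. by rewrite /Fr !sameblk_refl. Qed.

Lemma Fr_jk DS DP (j k : 'I_n) : sameblk DP j k -> (j < k)%N -> ~~ sameblk DS j k ->
  Fr DS DP j k = 1.
Proof. by move=> h1 h2 h3; rewrite /Fr h1 h3 h2. Qed.

Lemma rho_lt DS DP (j k : 'I_n) : sameblk DP j k -> (j < k)%N -> ~~ sameblk DS j k ->
  rhoSP R DS DP k < rhoSP R DS DP j.
Proof.
move=> h1 h2 h3; rewrite !rhoE.
suff : \sum_b Fr DS DP k b < \sum_b Fr DS DP j b by lra.
rewrite -subr_gt0 -sumrB (bigD1 k) //= Fr_kk (Fr_jk h1 h2 h3) subr0.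
apply: (@lt_le_trans _ _ 1); first exact: ltr01.
rewrite lerDl sumr_ge0 // => b _; rewrite subr_ge0; exact: Fr_le.
Qed.

Lemma sum_ge_term (I : finType) (P : pred I) (F : I -> R) (i0 : I) :
  (forall i, P i -> 0 <= F i) -> P i0 -> F i0 <= \sum_(i | P i) F i.
Proof.
move=> H h0; rewrite (bigD1 i0) //= lerDl sumr_ge0 // => i /andP[hi _]; exact: H.
Qed.

End Rho.

Section BlockPos.
Variable R : realType.
Variable n : nat.

Lemma block_pos (DS DP : {set 'I_n.-1}) (u : 'I_n -> R) (j0 : 'I_n)
  (Hsum : \sum_(j : 'I_n | sameblk DP j0 j) u j = 0)
  (Hsep : forall j k : 'I_n, sameblk DP j0 j -> sameblk DP j0 k -> 0 < u j -> u k < 0 ->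
      (j < k)%N && ~~ sameblk DS j k) :
  0 <= \sum_(j : 'I_n | sameblk DP j0 j) rhoSP R DS DP j * u j /\
  ((exists j : 'I_n, sameblk DP j0 j && (u j != 0)) ->
     0 < \sum_(j : 'I_n | sameblk DP j0 j) rhoSP R DS DP j * u j).
Proof.
set B := fun j : 'I_n => sameblk DP j0 j.
set rho := fun j => rhoSP R DS DP j.
set up := fun j => if 0 < u j then u j else 0.
set um := fun j => if u j < 0 then - u j else 0.
have upge0 j : 0 <= up j by rewrite /up; case: ifP => // /ltW.
have umge0 j : 0 <= um j by rewrite /um; case: ifP => // h; rewrite oppr_ge0 ltW.
have uE j : u j = up j - um j.
  rewrite /up /um; case: (ltgtP (u j) 0) => [h|h|h].
  - by rewrite sub0r opprK.
  - by rewrite subr0.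
  - by rewrite h subrr.
set Mp := \sum_(j | B j) up j.
set Mm := \sum_(j | B j) um j.
have eM : Mp = Mm.
  apply/eqP; rewrite -subr_eq0 /Mp /Mm -sumrB; apply/eqP; rewrite -[RHS]Hsum.
  by apply: eq_bigr => j _; rewrite [RHS]uE.
set T := \sum_(j | B j) rho j * u j.
have ET : \sum_(j | B j) \sum_(k | B k) (rho j - rho k) * up j * um k = Mm * T.
  have -> : T = \sum_(j | B j) rho j * up j - \sum_(k | B k) rho k * um k.
    rewrite -sumrB; apply: eq_bigr => j _; rewrite uE; ring.
  rewrite mulrBr -{2}eM [Mm * _]mulrC mulr_suml [Mp * _]mulr_suml -sumrB.
  apply: eq_bigr => j _; rewrite /Mm !mulr_sumr -sumrB; apply: eq_bigr => k _; ring.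
have term j k : B j -> B k -> 0 <= (rho j - rho k) * up j * um k.
  move=> hj hk; rewrite /up /um; case: ifP => hu; last by rewrite mulr0 mul0r.
  case: ifP => hv; last by rewrite mulr0.
  have /andP[hjk hS] := Hsep _ _ hj hk hu hv.
  have hP : sameblk DP j k by apply: sameblk_trans hk; rewrite sameblk_sym.
  have := rho_lt R hP hjk hS; rewrite -/(rho j) -/(rho k) => hr.
  have h1 : 0 <= rho j - rho k by rewrite subr_ge0 ltW.
  have h2 : 0 <= - u k by rewrite oppr_ge0 ltW.
  by rewrite mulr_ge0 // mulr_ge0 // ltW.
have MTge0 : 0 <= Mm * T.
  by rewrite -ET; apply: sumr_ge0 => j hj; apply: sumr_ge0 => k hk; exact: term.
have Mge0 : 0 <= Mm by apply: sumr_ge0.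
have Tge0 : 0 <= T.
  have [Mpos|] := boolP (0 < Mm).
    by move: MTge0; rewrite pmulr_rge0.
  rewrite lt_def negb_and Mge0 orbF negbK => /eqP M0.
  rewrite /T big1 // => j hj.
  have h1 : up j = 0 by exact: (psumr_eq0P (fun i _ => upge0 i) (etrans eM M0) hj).
  have h2 : um j = 0 by exact: (psumr_eq0P (fun i _ => umge0 i) M0 hj).
  by rewrite uE h1 h2 subrr mulr0.
split => // [[j /andP[hj hu0]]].
have [jp [hjp hupos]] : exists j, B j /\ 0 < up j.
  have : Mp != 0.
    rewrite eM; move: hu0; rewrite uE subr_eq0 => hne.
    apply/negP => /eqP M0; move: hne.
    rewrite (psumr_eq0P (fun i _ => umge0 i) M0) //.
    by rewrite (psumr_eq0P (fun i _ => upge0 i) (etrans eM M0)) // eqxx.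
  move/eqP/psumr_neq0P => /(_ (fun i _ => upge0 i)) [i /andP[hi hpos]].
  by exists i.
have [km [hkm hmpos]] : exists k, B k /\ 0 < um k.
  have : Mm != 0 by rewrite -eM; apply/negP => /eqP M0; move: hupos; rewrite (psumr_eq0P (fun i _ => upge0 i) M0) // ltxx.
  move/eqP/psumr_neq0P => /(_ (fun i _ => umge0 i)) [i /andP[hi hpos]].
  by exists i.
have Mpos : 0 < Mm by rewrite lt_def Mge0 andbT; apply/negP => /eqP M0; move: hmpos; rewrite (psumr_eq0P (fun i _ => umge0 i) M0) // ltxx.
have tpos : 0 < (rho jp - rho km) * up jp * um km.
  move: hupos hmpos; rewrite /up /um; case: ifP => hu; last by rewrite ltxx.
  case: ifP => hv; last by rewrite ltxx.
  have /andP[hjk hS] := Hsep _ _ hjp hkm hu hv.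
  have hP : sameblk DP jp km by apply: sameblk_trans hkm; rewrite sameblk_sym.
  have := rho_lt R hP hjk hS; rewrite -/(rho jp) -/(rho km) => hr h1 h2.
  by rewrite !mulr_gt0 // subr_gt0.
have : 0 < Mm * T.
  rewrite -ET; apply: (lt_le_trans tpos).
  apply: (le_trans _ (sum_ge_term (fun j hj => sumr_ge0 _ (fun k hk => term j k hj hk)) hjp)).
  exact: (sum_ge_term (fun k hk => term jp k hjp hk) hkm).
by rewrite pmulr_rgt0.
Qed.

End BlockPos.

Section NuNeg.

Variable R : realType.
Variable n : nat.

Lemma nu_neg (DS DP : {set 'I_n.-1}) (r : nat -> nat)
  (Hr0 : forall a : 'I_n, (0 < r a)%N)
  (Hrc : forall a b : 'I_n, sameblk DP a b -> r a = r b) (u : 'I_n -> R)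
  (Hsum : forall j0 : 'I_n, \sum_(j : 'I_n | sameblk DP j0 j) u j = 0)
  (Hsep : forall j k : 'I_n, sameblk DP j k -> 0 < u j -> u k < 0 ->
      (j < k)%N && ~~ sameblk DS j k)
  (Hnz : exists j, u j != 0) :
  \sum_j nuSP R DS DP r j * u j < 0.
Proof.
have rpos (a : 'I_n) : 0 < (r a)%:R :> R by rewrite ltr0n Hr0.
have spos (a : 'I_n) : 0 < (blocksize DP a)%:R :> R by rewrite ltr0n blocksize_gt0.
have -> : \sum_j nuSP R DS DP r j * u j = - \sum_j (rhoSP R DS DP j * u j / (r j)%:R).
  rewrite -sumrN; apply: eq_bigr => j _; by rewrite /nuSP !mulNr mulrAC.
rewrite oppr_lt0 (avg_sum DP).
have bp (j0 : 'I_n) : 0 <= \sum_(j : 'I_n | sameblk DP j0 j) rhoSP R DS DP j * u j /\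
  ((exists j : 'I_n, sameblk DP j0 j && (u j != 0)) ->
     0 < \sum_(j : 'I_n | sameblk DP j0 j) rhoSP R DS DP j * u j).
  have Hs' : forall j k : 'I_n, sameblk DP j0 j -> sameblk DP j0 k -> 0 < u j -> u k < 0 ->
      (j < k)%N && ~~ sameblk DS j k.
    move=> j k hj hk; apply: Hsep; apply: sameblk_trans hk.
    by rewrite sameblk_sym.
  exact: (@block_pos R n DS DP u j0 (Hsum j0) Hs').
have eT (j0 : 'I_n) : \sum_(j : 'I_n | sameblk DP j0 j) rhoSP R DS DP j * u j / (r j)%:R
   = (\sum_(j : 'I_n | sameblk DP j0 j) rhoSP R DS DP j * u j) / (r j0)%:R.
  rewrite mulr_suml; apply: eq_bigr => j hj; by rewrite (Hrc _ _ hj).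
have ge (j0 : 'I_n) : 0 <= (\sum_(j : 'I_n | sameblk DP j0 j) rhoSP R DS DP j * u j / (r j)%:R) / (blocksize DP j0)%:R.
  rewrite eT; apply: divr_ge0; last exact: ltW.
  by apply: divr_ge0; [case: (bp j0) | exact: ltW].
case: Hnz => js hjs.
pose G := fun j0 : 'I_n => (\sum_(j : 'I_n | sameblk DP j0 j) rhoSP R DS DP j * u j / (r j)%:R) / (blocksize DP j0)%:R.
have gpos : 0 < G js.
  rewrite /G eT; apply: divr_gt0 => //; apply: divr_gt0 => //.
  case: (bp js) => _; apply; exists js; by rewrite sameblk_refl.
have H := @sum_ge_term R _ xpredT G js (fun i _ => ge i) isT.
exact: (lt_le_trans gpos H).
Qed.

End NuNeg.

Section PD.
Variable R : realType.

Lemma vvT_pos m (v : 'rV[R]_m) : v != 0 -> 0 < (v *m v^T) 0 0.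
Proof.
move=> vnz; have [i hi] : exists i, v 0 i != 0.
  apply/existsP; apply: contraNT vnz; rewrite negb_exists => /forallP H.
  by apply/eqP/rowP => i; rewrite mxE; apply/eqP; move: (H i); rewrite negbK.
rewrite mxE (bigD1 i) //= mxE ltr_pwDl //.
  by rewrite lt_def sqrf_eq0 hi /= sqr_ge0.
by rewrite sumr_ge0 // => j _; rewrite mxE -expr2 sqr_ge0.
Qed.

Lemma pd_det_pos m (M : 'M[R]_m) :
  (forall x : 'rV_m, x != 0 -> 0 < (x *m M *m x^T) 0 0) -> 0 < \det M.
Proof.
move=> Hpd.
pose PM : 'M[{poly R}]_m := \matrix_(i, j) ('X * (M i j)%:P + (1 - 'X) * (i == j)%:R).
have ev t : (\det PM).[t] = \det (t *: M + (1 - t) *: 1%:M).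
  rewrite -horner_evalE -det_map_mx; congr (\det _); apply/matrixP => i j.
  rewrite !mxE /= horner_evalE hornerD !hornerM hornerC hornerX hornerD hornerN hornerX hornerC.
  by case: eqP => _; rewrite /= ?hornerC ?mulr1n ?mulr0n ?hornerC.
have nz t : 0 <= t <= 1 -> \det (t *: M + (1 - t) *: 1%:M) != 0.
  case/andP => t0 t1; apply/negP => /det0P [v vnz vA].
  have : (v *m (t *: M + (1 - t) *: 1%:M) *m v^T) 0 0 = 0 by rewrite vA mul0mx mxE.
  have E : (v *m (t *: M + (1 - t) *: 1%:M) *m v^T) 0 0
      = t * (v *m M *m v^T) 0 0 + (1 - t) * (v *m v^T) 0 0.
    rewrite mulmxDr mulmxDl -!scalemxAr !scalemxAl mulmx1.
    by rewrite mxE -!scalemxAl [((_ *: _) : 'M_(1,1)) 0 0]mxE [((_ *: _) : 'M_(1,1)) 0 0]mxE.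
  rewrite E.
  have h1 := Hpd v vnz; have h2 := vvT_pos vnz.
  have [->|tpos] := eqVneq t 0.
    by rewrite mul0r subr0 mul1r add0r => /eqP; rewrite gt_eqF.
  have g1 : 0 <= t * (v *m M *m v^T) 0 0 by rewrite mulr_ge0 // ltW.
  have g2 : 0 <= (1 - t) * (v *m v^T) 0 0 by rewrite mulr_ge0 ?subr_ge0 // ltW.
  move=> /eqP; rewrite paddr_eq0 //.
  by rewrite mulf_eq0 (negbTE tpos) (gt_eqF h1).
rewrite ltNge; apply/negP => hle.
have hprod : (\det PM).[0] * (\det PM).[1] <= 0.
  rewrite !ev scale0r add0r subr0 !scale1r det1 mul1r subrr scale0r addr0.
  exact: hle.
have [t ht rt] := poly_ivt ler01 hprod.
move: ht; rewrite in_itv /= => ht.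
by have := nz t ht; rewrite -ev (rootP rt) eqxx.
Qed.

End PD.

Section Gram.
Variable R : realType.
Variable n : nat.

Lemma gram_det_pos (A : {set 'I_n.-1}) (f h : 'I_n.-1 -> 'I_n -> R) :
  (forall k j, k \in A -> j \in A -> dotv (f k) (h j) = (k == j)%:R) ->
  0 < \det (gram A f).
Proof.
move=> Hd; apply: pd_det_pos => x xnz.
pose v := fun l => \sum_i x 0 i * f (enum_val i) l.
have E : (x *m gram A f *m x^T) 0 0 = dotv v v.
  have E1 j : (x *m gram A f) 0 j * x^T j 0
      = \sum_i \sum_l x 0 i * f (enum_val i) l * (f (enum_val j) l * x 0 j).
    rewrite !mxE mulr_suml; apply: eq_bigr => i _.
    rewrite !mxE /dotv mulr_sumr mulr_suml; apply: eq_bigr => l _; ring.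
  have E2 l : v l * v l
      = \sum_j \sum_i x 0 i * f (enum_val i) l * (f (enum_val j) l * x 0 j).
    rewrite /v mulrC mulr_suml; apply: eq_bigr => j _.
    rewrite mulr_sumr; apply: eq_bigr => i _; ring.
  rewrite mxE (eq_bigr _ (fun j _ => E1 j)) /dotv (eq_bigr _ (fun l _ => E2 l)).
  rewrite [RHS]exchange_big /=; apply: eq_bigr => j _.
  by rewrite [RHS]exchange_big.
rewrite E /dotv.
have key j : dotv v (h (enum_val j)) = x 0 j.
  have dk i : \sum_l x 0 i * f (enum_val i) l * h (enum_val j) l
      = x 0 i * (j == i)%:R.
    under eq_bigr => l _ do rewrite -mulrA.
    by rewrite -mulr_sumr -/(dotv _ _) Hd ?enum_valP // (inj_eq enum_val_inj) eq_sym.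
  rewrite /dotv /v.
  under eq_bigr => l _ do rewrite mulr_suml.
  rewrite exchange_big /= (eq_bigr _ (fun i _ => dk i)) (bigD1 j) //= eqxx mulr1 big1 ?addr0 //.
  by move=> i hi; rewrite eq_sym (negbTE hi) mulr0.
have [l hl] : exists l, v l != 0.
  apply/existsP; apply: contraNT xnz; rewrite negb_exists => /forallP H.
  apply/eqP/rowP => j; rewrite mxE -key.
  by rewrite /dotv big1 // => l _; move: (H l); rewrite negbK => /eqP ->; rewrite mul0r.
rewrite (bigD1 l) //= ltr_pwDl //.
  by rewrite lt_def mulf_neq0 //= -expr2 sqr_ge0.
by rewrite sumr_ge0 // => l' _; rewrite -expr2 sqr_ge0.
Qed.

Lemma covol_neq0 (A : {set 'I_n.-1}) (f h : 'I_n.-1 -> 'I_n -> R) :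
  (forall k j, k \in A -> j \in A -> dotv (f k) (h j) = (k == j)%:R) ->
  covol A f != 0.
Proof. by move=> Hd; rewrite /covol gt_eqF // sqrtr_gt0 (gram_det_pos Hd). Qed.

End Gram.

Section Alpha.
Variable R : realType.
Variable n : nat.

Lemma ltn_lo (l : 'I_n.-1) : (l < n)%N.
Proof. by have := ltn_ord l; lia. Qed.
Lemma ltn_hi (l : 'I_n.-1) : (l.+1 < n)%N.
Proof. by have := ltn_ord l; lia. Qed.
Definition olo (l : 'I_n.-1) : 'I_n := Ordinal (ltn_lo l).
Definition ohi (l : 'I_n.-1) : 'I_n := Ordinal (ltn_hi l).

Lemma sum_delta (u : 'I_n -> R) (a : 'I_n) (m : nat) : a = m :> nat ->
  \sum_i u i * (i == m :> nat)%:R = u a.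
Proof.
move=> ha; rewrite (bigD1 a) //= ha eqxx mulr1 big1 ?addr0 // => i hi.
have -> : (i == m :> nat) = false.
  by apply/negbTE; apply: contra hi => /eqP E; apply/eqP/val_inj; rewrite /= E ha.
by rewrite mulr0.
Qed.

Lemma dot_ealpha (u : 'I_n -> R) (l : 'I_n.-1) :
  dotv u (ealpha R l) = u (olo l) - u (ohi l).
Proof.
rewrite /dotv /ealpha.
under eq_bigr => i _ do rewrite mulrBr.
by rewrite sumrB (@sum_delta u (olo l) l erefl) (@sum_delta u (ohi l) l.+1 erefl).
Qed.

Lemma dot_ealphaC (u : 'I_n -> R) (l : 'I_n.-1) :
  dotv (ealpha R l) u = u (olo l) - u (ohi l).
Proof. by rewrite -dot_ealpha /dotv; apply: eq_bigr => i _; rewrite mulrC. Qed.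

Lemma dotvC (u v : 'I_n -> R) : dotv u v = dotv v u.
Proof. by rewrite /dotv; apply: eq_bigr => i _; rewrite mulrC. Qed.

Lemma block_walk (D : {set 'I_n.-1}) (v : 'I_n -> R) (k : nat)
  (Hst : forall l : 'I_n.-1, l \in D -> v (olo l) - v (ohi l) = (l == k :> nat)%:R) :
  forall i i' : 'I_n, (i <= i')%N -> sameblk D i i' ->
    v i - v i' = ((i <= k) && (k < i'))%N%:R.
Proof.
move=> i i' hii'; move: {2}(i' - i)%N (erefl (i' - i)%N) => d.
elim: d i' hii' => [|d IH] i' hii' hd hb.
  have -> : i' = i by apply: val_inj; move: hd hii'; rewrite /=; lia.
  rewrite subrr; have -> : ((i <= k) && (k < i))%N = false by apply/negbTE; lia.
  by [].
have hl : (i + d < n.-1)%N by have := ltn_ord i'; move: hd hii'; lia.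
pose l : 'I_n.-1 := Ordinal hl.
have hlD : l \in D.
  by move/sameblkP: hb; apply; rewrite /=; move: hd hii'; lia.
have hlo : olo l = Ordinal (ltn_lo l) by [].
have e1 : ohi l = i' by apply: val_inj => /=; move: hd hii'; lia.
have hii'' : (i <= olo l)%N by rewrite /=; lia.
have hb' : sameblk D i (olo l) by apply: sameblk_mid hb _; rewrite /=; move: hd hii'; lia.
have hd' : (olo l - i)%N = d by rewrite /=; lia.
have := IH (olo l) hii'' hd' hb'.
have := Hst l hlD; rewrite e1 => E1 E2.
have -> : v i - v i' = (v i - v (olo l)) + (v (olo l) - v i') by rewrite addrA subrK.
rewrite E1 E2 /=.
have ei' : nat_of_ord i' = (i + d).+1 by move: hd hii'; lia.
rewrite ei'.
have [hA|hA] := boolP ((i <= k) && (k < i + d))%N.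
  have hB : ((i + d)%N == k) = false by apply/negbTE; lia.
  have hC : ((i <= k) && (k < (i + d).+1))%N by lia.
  by rewrite hB hC addr0.
have [hB|hB] := boolP ((i + d)%N == k).
  have hC : ((i <= k) && (k < (i + d).+1))%N by lia.
  by rewrite hC add0r.
have hC : ((i <= k) && (k < (i + d).+1))%N = false by apply/negbTE; lia.
by rewrite hC addr0.
Qed.

End Alpha.

Section Factors.
Variable R : realType.
Variable n : nat.

Definition stepv (DQ : {set 'I_n.-1}) (v : 'I_n -> R) :=
  exists k : 'I_n.-1, [/\ k \notin DQ, (forall i : 'I_n, 0 < v i -> (i <= k)%N),
     (forall i : 'I_n, v i < 0 -> (k < i)%N), \sum_i v i = 0 & exists i, v i != 0].

Lemma in_a_const (D : {set 'I_n.-1}) (c : R) : in_a D (fun _ => c).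
Proof. by []. Qed.

Lemma coroot_num (DR : {set 'I_n.-1}) (k : 'I_n.-1) (i : 'I_n) :
  \sum_(j : 'I_n | sameblk DR i j) ealpha R k j
   = (sameblk DR i (olo k))%:R - (sameblk DR i (ohi k))%:R.
Proof.
rewrite big_mkcond /=.
transitivity (dotv (ealpha R k) (fun j : 'I_n => (sameblk DR i j)%:R)); last by rewrite dot_ealphaC.
by rewrite /dotv; apply: eq_bigr => j _; case: ifP; rewrite ?mulr1 ?mulr0.
Qed.

Lemma coroot_step (DQ DR : {set 'I_n.-1}) (k : 'I_n.-1) :
  DQ \subset DR -> k \notin DR -> stepv DQ (coroot R DR k).
Proof.
move=> sQR kR; exists k; split.
- by apply: contra kR; apply: (subsetP sQR).
- move=> i; apply: contraTT; rewrite -ltnNge => hki.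
  rewrite /coroot /projA coroot_num -leNgt.
  have -> : sameblk DR i (olo k) = false.
    by apply/negbTE; rewrite sameblk_sym; apply: (sameblk_cut kR) => //=.
  by rewrite sub0r mulNr oppr_le0 mulr_ge0 // invr_ge0 ler0n.
- move=> i; apply: contraTT; rewrite -leqNgt => hik.
  rewrite /coroot /projA coroot_num -leNgt.
  have -> : sameblk DR i (ohi k) = false.
    by apply/negbTE; apply: (sameblk_cut kR) => //=.
  by rewrite subr0 mulr_ge0 // invr_ge0 ler0n.
- have h1 := @dot_projA R n DR (ealpha R k) (fun _ => 1) (@in_a_const DR 1).
  rewrite dot_ealphaC subrr in h1.
  rewrite /dotv in h1; rewrite -[RHS]h1; apply: eq_bigr => i _; by rewrite mulr1.
- exists (olo k); rewrite /coroot /projA coroot_num sameblk_refl.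
  have -> : sameblk DR (olo k) (ohi k) = false by rewrite /= sameblk_succ (negbTE kR).
  rewrite subr0 mul1r invr_eq0 pnatr_eq0 -lt0n; exact: blocksize_gt0.
Qed.

Lemma varpi_step (DQ DR : {set 'I_n.-1}) (varpi : 'I_n.-1 -> 'I_n -> R) (k : 'I_n.-1) :
  is_coweight_basis DQ DR varpi -> k \in DR :\: DQ -> stepv DQ (varpi k).
Proof.
move=> [H1 H2] hk; have [HaQ Ha0] := H1 k hk.
have kQ : k \notin DQ by move: hk; rewrite inE => /andP[].
have Hst : forall l : 'I_n.-1, l \in DR -> varpi k (olo l) - varpi k (ohi l) = (l == k :> nat)%:R.
  move=> l lR; have [lQ|lQ] := boolP (l \in DQ).
    rewrite (HaQ (olo l) (ohi l)); last by rewrite /= sameblk_succ.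
    rewrite subrr; have -> : (l == k :> nat) = false.
      apply/negbTE; apply: contra kQ => /eqP e.
      by have -> : k = l by apply: val_inj.
    by [].
  rewrite -dot_ealpha H2 //; last by rewrite inE lQ lR.
  by rewrite val_eqE eq_sym.
have walk := block_walk Hst.
exists k; split => //.
- move=> i vi; rewrite leqNgt; apply/negP => hki.
  have : 0 < \sum_(j : 'I_n | sameblk DR i j) varpi k j.
    apply: (lt_le_trans vi); apply: sum_ge_term; last exact: sameblk_refl.
    move=> j hj; apply: (le_trans (ltW vi)).
    case: (leqP j i) => hji.
      have := walk j i hji; rewrite sameblk_sym hj => /(_ isT) E.
      by rewrite -subr_ge0 E ler0n.
    have := walk i j (ltnW hji) hj => E.
    move: E; rewrite (_ : ((i <= k) && (k < j))%N = false); last by apply/negbTE; lia.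
    by move/eqP; rewrite subr_eq0 => /eqP ->.
  by rewrite Ha0 ltxx.
- move=> i vi; rewrite ltnNge; apply/negP => hik.
  have : \sum_(j : 'I_n | sameblk DR i j) varpi k j < 0.
    rewrite -oppr_gt0 -sumrN.
    apply: (lt_le_trans (_ : 0 < - varpi k i)); first by rewrite oppr_gt0.
    apply: (sum_ge_term (F := fun j => - varpi k j)); last exact: sameblk_refl.
    move=> j hj; apply: (le_trans (ltW (_ : 0 < - varpi k i))); first by rewrite oppr_gt0.
    rewrite lerN2.
    case: (leqP j i) => hji.
      have := walk j i hji; rewrite sameblk_sym hj => /(_ isT).
      rewrite (_ : ((j <= k) && (k < i))%N = false); last by apply/negbTE; lia.
      by move/eqP; rewrite subr_eq0 => /eqP ->.
    have := walk i j (ltnW hji) hj => E.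
    by rewrite -subr_ge0 E ler0n.
  by rewrite Ha0 ltxx.
- by rewrite (sum_in_a0 Ha0).
- have := Hst k; rewrite eqxx; move: hk; rewrite inE => /andP[_ kR] /(_ kR) E.
  case: (eqVneq (varpi k (olo k)) 0) => [e0|]; last by exists (olo k).
  exists (ohi k); move: E; rewrite e0 sub0r => E.
  by rewrite -oppr_eq0 E oner_eq0.
Qed.

End Factors.

Section OneW.
Variable R : realType.
Variable n : nat.

Lemma reindexE (w : 'S_n) (y v : 'I_n -> R) :
  \sum_i wact w y i * v i = \sum_j y j * v (w j).
Proof.
rewrite (reindex_inj (@perm_inj _ w)) /=; apply: eq_bigr => j _.
by rewrite /wact permK.
Qed.

Lemma sum_perm (w : 'S_n) (v : 'I_n -> R) : \sum_j v (w j) = \sum_i v i.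
Proof. by rewrite [RHS](reindex_inj (@perm_inj _ w)). Qed.

Lemma one_w (DQ DP DS : {set 'I_n.-1}) (r : nat -> nat)
  (Hr0 : forall a : 'I_n, (0 < r a)%N)
  (Hrc : forall a b : 'I_n, sameblk DP a b -> r a = r b)
  (w : 'S_n) (Hw : in_QWP DQ DP w)
  (HS : forall g : 'M[rat]_n, inPar DS g <-> inPw DQ DP w g)
  (v : 'I_n -> R) (Hv : stepv DQ v) :
  (exists y, in_aG DP y /\ \sum_i wact w y i * v i != 0) \/
  \sum_i wact w (nuSP R DS DP r) i * v i < 0.
Proof.
case: (Classical_Prop.classic (exists y, in_aG DP y /\ \sum_i wact w y i * v i != 0)) => [h|h].
  by left.
right.
have Z : forall y, in_aG DP y -> \sum_j y j * v (w j) = 0.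
  move=> y hy; case: (eqVneq (\sum_j y j * v (w j)) 0) => // hne.
  by exfalso; apply: h; exists y; split => //; rewrite reindexE.
case: Hv => kk [kQ Hpos Hneg Hs0 Hnz].
have su : \sum_j v (w j) = 0 by rewrite sum_perm.
rewrite reindexE; apply: nu_neg => //.
- move=> j0.
  have n0 : n%:R != 0 :> R by rewrite pnatr_eq0 -lt0n; apply: (leq_ltn_trans _ (ltn_ord j0)).
  pose s := (blocksize DP j0)%:R : R.
  pose y := fun j : 'I_n => (sameblk DP j0 j)%:R - s / n%:R.
  have hy : in_aG DP y.
    split.
      move=> i j hij; rewrite /y (_ : sameblk DP j0 i = sameblk DP j0 j) //.
      apply/idP/idP => h1; first exact: sameblk_trans h1 hij.
      by apply: sameblk_trans h1 _; rewrite sameblk_sym.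
    have e1 : \sum_(j : 'I_n) ((sameblk DP j0 j)%:R : R) = s.
      rewrite /s /blocksize -[RHS]mul1r -sum_cond_const.
      by apply: eq_bigr => j _; case: (sameblk DP j0 j).
    have e2 : \sum_(j : 'I_n) (s / n%:R) = s.
      by rewrite sumr_const card_ord -[X in X = _]mulr_natr divfK.
    by rewrite /y sumrB e1 e2 subrr.
  have E : \sum_(j : 'I_n) ((sameblk DP j0 j)%:R - s / n%:R) * v (w j)
      = \sum_(j : 'I_n | sameblk DP j0 j) v (w j).
    rewrite (eq_bigr (fun j : 'I_n => (sameblk DP j0 j)%:R * v (w j) - s / n%:R * v (w j))); last first.
      by move=> j _; rewrite mulrBl.
    rewrite sumrB -mulr_sumr su mulr0 subr0 [RHS]big_mkcond /=.
    by apply: eq_bigr => j _; case: (sameblk DP j0 j); rewrite ?mul1r ?mul0r.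
  by rewrite -E; exact: Z y hy.
- move=> j k hjk uj uk.
  have h1 := Hpos _ uj; have h2 := Hneg _ uk.
  have hwl : (w j < w k)%N by lia.
  have hjk' : (j < k)%N.
    case: (ltngtP j k) => // [hkj|ejk].
      by have := w_mono Hw (etrans (sameblk_sym _ _ _) hjk) hkj; lia.
    by move: hwl; rewrite (_ : j = k) ?ltnn //; apply: val_inj.
  rewrite hjk' /=; apply: (S_sep HS hjk hwl).
  by rewrite (sameblk_cut kQ).
- case: Hnz => i hi; exists (w^-1 i)%g; by rewrite permKV.
Qed.

End OneW.

Section Final1.
Variable R : realType.
Variable n : nat.
Local Open Scope complex_scope.

Lemma cplx_neq0 (A B : R) : (B != 0) || (A != 0) -> 'i * A%:C + B%:C != 0.
Proof.
move=> h; rewrite eq_complex /=.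
rewrite !mul0r mulr0 mul1r subr0 add0r addr0.
by rewrite add0r negb_and.

Qed.

Lemma pairC_split (a b v : 'I_n -> R) :
  pairC (fun i => 'i * (a i)%:C + (b i)%:C) v
  = 'i * (\sum_i a i * v i)%:C + (\sum_i b i * v i)%:C.
Proof.
rewrite /pairC !rmorph_sum mulr_sumr -big_split; apply: eq_bigr => i _.
by rewrite !rmorphM mulrDl mulrA.
Qed.

Lemma avoid (DP : {set 'I_n.-1}) (L : 'I_n.-1 -> ('I_n -> R) -> ('I_n -> R) -> R)
  (c : 'I_n.-1 -> R)
  (Llin : forall k x x' y y' t, L k (fun i => x i + t * y i) (fun i => x' i + t * y' i)
             = L k x x' + t * L k y y')
  (s : seq 'I_n.-1)
  (Hk : forall k, k \in s -> c k != 0 \/ exists y y', [/\ in_aG DP y, in_aG DP y' & L k y y' != 0]) :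
  exists x x', [/\ in_aG DP x, in_aG DP x' & forall k, k \in s -> (c k != 0) || (L k x x' != 0)].
Proof.
have aG0 : in_aG DP (fun _ : 'I_n => 0 : R) by split => //; rewrite big1.
have aGD x y t : in_aG DP x -> in_aG DP y -> in_aG DP (fun i => x i + t * y i).
  move=> [hx sx] [hy sy]; split; first by move=> i j hij; rewrite (hx i j hij) (hy i j hij).
  by rewrite big_split /= -mulr_sumr sx sy mulr0 addr0.
elim: s Hk => [|k s IH] Hk.
  by exists (fun _ => 0), (fun _ => 0); split.
have [x [x' [hx hx' H]]] : exists x x', [/\ in_aG DP x, in_aG DP x' &
    forall k, k \in s -> (c k != 0) || (L k x x' != 0)].
  by apply: IH => j hj; apply: Hk; rewrite inE hj orbT.
have [ok|nok] := boolP ((c k != 0) || (L k x x' != 0)).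
  exists x, x'; split => // j; rewrite inE => /orP [/eqP -> //|hj]; exact: H.
move: nok; rewrite negb_or !negbK => /andP [ck /eqP Lk].
case: (Hk k (mem_head _ _)) => [ck'|[y [y' [hy hy' hL]]]]; first by rewrite (eqP ck) eqxx in ck'.
pose t := 1 + \sum_(j : 'I_n.-1) `| L j x x' / L j y y' |.
have t1 : 1 <= t by rewrite lerDl sumr_ge0.
exists (fun i => x i + t * y i), (fun i => x' i + t * y' i); split; try exact: aGD.
move=> j; rewrite inE => /orP [/eqP ->|hj].
  rewrite Llin Lk add0r mulf_neq0 ?orbT //.
  by apply: contraTneq t1 => ->; rewrite ler10.
have [cj|] := boolP (c j != 0); first by [].
rewrite /= Llin => ncj; have := H j hj; rewrite (negbTE ncj) /= => Lx.
have [Ly0|Lyn] := eqVneq (L j y y') 0; first by rewrite Ly0 mulr0 addr0.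
apply/negP => /eqP E.
have ht : t = - (L j x x' / L j y y').
  apply: (mulIf Lyn); rewrite mulNr divfK //; apply/eqP.
  by rewrite -addr_eq0 addrC E.
have hq : `| L j x x' / L j y y' | <= \sum_(j : 'I_n.-1) `| L j x x' / L j y y' |.
  by apply: (@sum_ge_term R _ xpredT (fun j => `| L j x x' / L j y y' |)).
have et : `|t| = `| L j x x' / L j y y' | by rewrite ht normrN.
rewrite ger0_norm ?(le_trans ler01 t1) // in et.
move: hq; rewrite -et /t.
set S := \sum_(_ : _) _ => hS.
have : 0 <= 1 :> R by exact: ler01.
lra.
Qed.

End Final1.

Section Final2.
Variable R : realType.
Variable n : nat.
Local Open Scope complex_scope.

Lemma factor_ok (DQ DP DS DS' : {set 'I_n.-1}) (r : nat -> nat)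
  (Hr0 : forall a : 'I_n, (0 < r a)%N)
  (Hrc : forall a b : 'I_n, sameblk DP a b -> r a = r b)
  (w w' : 'S_n) (Hw : in_QWP DQ DP w) (Hw' : in_QWP DQ DP w')
  (HS : forall g : 'M[rat]_n, inPar DS g <-> inPw DQ DP w g)
  (HS' : forall g : 'M[rat]_n, inPar DS' g <-> inPw DQ DP w' g)
  (v : 'I_n -> R) (Hv : stepv DQ v) :
  (\sum_i (wact w (nuSP R DS DP r) i + wact w' (nuSP R DS' DP r) i) * v i != 0) \/
  exists y y', [/\ in_aG DP y, in_aG DP y' & \sum_i (wact w y i + wact w' y' i) * v i != 0].
Proof.
have aG0 : in_aG DP (fun _ : 'I_n => 0 : R) by split => //; rewrite big1.
case: (one_w Hr0 Hrc Hw HS Hv) => [[y [hy hne]]|neg1].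
  right; exists y, (fun _ => 0); split => //.
  by rewrite (eq_bigr (fun i => wact w y i * v i)) // => i _; rewrite /wact addr0.
case: (one_w Hr0 Hrc Hw' HS' Hv) => [[y [hy hne]]|neg2].
  right; exists (fun _ => 0), y; split => //.
  by rewrite (eq_bigr (fun i => wact w' y i * v i)) // => i _; rewrite /wact add0r.
left; rewrite (eq_bigr (fun i => wact w (nuSP R DS DP r) i * v i
                              + wact w' (nuSP R DS' DP r) i * v i)); last first.
  by move=> i _; rewrite mulrDl.
rewrite big_split /=; have := ltrD neg1 neg2; rewrite addr0 => hlt.
by rewrite lt_eqF.
Qed.

Definition hR (j : 'I_n.-1) : 'I_n -> R := fun i => ((i <= j)%N)%:R.

Lemma coroot_dual (DR : {set 'I_n.-1}) (k j : 'I_n.-1) :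
  k \in ~: DR -> j \in ~: DR -> dotv (coroot R DR k) (hR j) = (k == j)%:R.
Proof.
rewrite !inE => kR jR.
rewrite /coroot dot_projA; last first.
  move=> a b hab; rewrite /hR.
  have [ha|ha] := leqP a j; have [hb|hb] := leqP b j => //.
    by move: hab; rewrite (negbTE (sameblk_cut jR ha hb)).
  by move: hab; rewrite sameblk_sym (negbTE (sameblk_cut jR hb ha)).
rewrite dot_ealphaC /hR /= -val_eqE /=.
move: (nat_of_ord k) (nat_of_ord j) => a b.
case: (ltngtP a b) => h.
- by rewrite subrr.
- by rewrite subrr.
- by rewrite subr0.
Qed.

End Final2.

Unset Implicit Arguments. Set Strict Implicit.

Local Open Scope complex_scope.

Theorem mainTheorem10 (R : realType) (n : nat)
  (DP : {set 'I_n.-1}) (r : nat -> nat)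
  (Hr0 : forall a : 'I_n, (0 < r a)%N)
  (Hrc : forall a b : 'I_n, sameblk DP a b -> r a = r b)
  (Hrd : forall a : 'I_n, (r a %| blocksize DP a)%N)
  (DQ DR : {set 'I_n.-1}) (HQR : DQ \subset DR)
  (w w' : 'S_n) (Hw : in_QWP DQ DP w) (Hw' : in_QWP DQ DP w')
  (Hpi : forall g : 'M[rat]_n, inPar (Dpi DP r) g -> inPw DQ DP w g /\ inPw DQ DP w' g)
  (DS DS' : {set 'I_n.-1})
  (HS : forall g : 'M[rat]_n, inPar DS g <-> inPw DQ DP w g)
  (HS' : forall g : 'M[rat]_n, inPar DS' g <-> inPw DQ DP w' g)
  (varpi : 'I_n.-1 -> 'I_n -> R) (Hvarpi : is_coweight_basis DQ DR varpi) :
  exists x x' : 'I_n -> R, [/\ in_aG DP x, in_aG DP x' &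
    let mu : 'I_n -> R[i] := fun i =>
      'i * (wact w x i + wact w' x' i)%:C
      + (wact w (@nuSP R n DS DP r) i + wact w' (@nuSP R n DS' DP r) i)%:C in
    thetahat DQ DR varpi mu * thetaR DR mu != 0].
Proof.
pose fac k := if k \in DR then varpi k else coroot R DR k.
pose L k (x x' : 'I_n -> R) := \sum_i (wact w x i + wact w' x' i) * fac k i.
pose c k := \sum_i (wact w (@nuSP R n DS DP r) i + wact w' (@nuSP R n DS' DP r) i) * fac k i.
pose s := enum [set k : 'I_n.-1 | (k \in DR :\: DQ) || (k \notin DR)].
have Llin : forall k x x' y y' t, L k (fun i => x i + t * y i) (fun i => x' i + t * y' i)
             = L k x x' + t * L k y y'.
  move=> k x x' y y' t; rewrite /L mulr_sumr -big_split; apply: eq_bigr => i _.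
  rewrite /wact /=; ring.
have Hk : forall k, k \in s -> c k != 0 \/
    exists y y', [/\ in_aG DP y, in_aG DP y' & L k y y' != 0].
  move=> k; rewrite mem_enum inE => hk.
  apply: (factor_ok Hr0 Hrc Hw Hw' HS HS').
  rewrite /fac; case: ifP => kR.
    apply: varpi_step Hvarpi _.
    by move: hk; rewrite inE kR /= andbT orbF.
  by apply: coroot_step HQR _; rewrite kR.
have [x [x' [hx hx' H]]] := avoid Llin Hk.
exists x, x'; split => //.
move=> mu.
have hpair : forall k, k \in s -> pairC mu (fac k) != 0.
  move=> k hk; rewrite /mu pairC_split; apply: cplx_neq0.
  by have := H k hk; rewrite /c /L.
rewrite /thetahat /thetaR.
have [H1 H2] := Hvarpi.
rewrite !mulf_neq0 //.
- rewrite fmorph_eq0 invr_eq0.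
  have hd : forall k j : 'I_n.-1, k \in DR :\: DQ -> j \in DR :\: DQ ->
      dotv (varpi k) (ealpha R j) = (k == j)%:R.
    by move=> k j hk hj; apply: H2.
  exact: (covol_neq0 hd).
- apply/prodf_neq0 => k hk.
  have := hpair k; rewrite /fac mem_enum inE hk /=.
  by move: hk; rewrite inE => /andP[_ ->] /(_ isT).
- rewrite fmorph_eq0 invr_eq0.
  have hd : forall k j : 'I_n.-1, k \in ~: DR -> j \in ~: DR ->
      dotv (coroot R DR k) (hR R j) = (k == j)%:R.
    by move=> k j hk hj; apply: coroot_dual.
  exact: (covol_neq0 hd).
- apply/prodf_neq0 => k hk.
  move: hk; rewrite inE => hk.
  have := hpair k; rewrite /fac mem_enum inE hk orbT (negbTE hk).
  by move/(_ isT).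
Qed.
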